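(* For every graph $G=(V,E)$ with $V=\{1,\dots,n\}$ we have $\vartheta_2(G)=\vartheta_2'(G)$, where $$\vartheta_2'(G)=\max\Big\{\sum_{i=1}^n c(v_i,v_0)\Big\}$$ with the maximum taken over all integers $d\geq1$ and all families $(v_0,v_1,\dots,v_n)$ of vectors in $\mathbb R^d$ such that $\langle v_0,v_i\rangle\geq0$ for all $i$ and $\langle v_i,v_j\rangle\leq0$ whenever $\{i,j\}\in E$.
   Context: For $x,y\in\mathbb R^d$, $c(x,y)=\langle x,y\rangle^2\|x\|^{-2}\|y\|^{-2}$ if $x,y\neq0$ and $c(x,y)=0$ otherwise. For a graph $H$ on $\{1,\dots,n\}$ and real $k>1$, a rigid vector $k$-coloring of $H$ is an $n$-tuple of unit vectors $(u_1,\dots,u_n)$ in $\mathbb R^n$ with $\langle u_i,u_j\rangle=-1/(k-1)$ for all edges $\{i,j\}$ of $H$ and $\langle u_i,u_j\rangle\geq-1/(k-1)$ for all non-adjacent $i\neq j$; $\bar\vartheta_2(H)$ is the infimum of $k>1$ such that $H$ admits a rigid vector $k$-coloring, and $\vartheta_2(G)=\bar\vartheta_2(\bar G)$ where $\bar G$ is the complement of $G$. *)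

(* Defs.v *)
From HB Require Import structures.
From mathcomp Require Import all_boot all_order all_algebra.
From mathcomp Require Import classical_sets reals.
Set Implicit Arguments. Unset Strict Implicit. Unset Printing Implicit Defensive.
Import Order.TTheory GRing.Theory Num.Theory.
Local Open Scope ring_scope.
Local Open Scope classical_set_scope.

Definition dotp (R : realType) (d : nat) (x y : 'rV[R]_d) : R :=
  \sum_(i < d) x 0 i * y 0 i.

Definition cfun (R : realType) (d : nat) (x y : 'rV[R]_d) : R :=
  if (x != 0) && (y != 0) then
    dotp x y ^+ 2 / (dotp x x * dotp y y)
  else 0.

Definition simple_graph (n : nat) (e : rel 'I_n) : Prop :=
  (forall i j, e i j = e j i) /\ (forall i, e i i = false).

Definition compl_graph (n : nat) (e : rel 'I_n) : rel 'I_n :=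
  fun i j => (i != j) && ~~ e i j.

Definition rigid_vector_coloring (R : realType) (n : nat) (H : rel 'I_n)
    (k : R) (u : 'I_n -> 'rV[R]_n) : Prop :=
  (forall i, dotp (u i) (u i) = 1) /\
  (forall i j, H i j -> dotp (u i) (u j) = - (k - 1)^-1) /\
  (forall i j, i != j -> ~~ H i j -> - (k - 1)^-1 <= dotp (u i) (u j)).

Definition theta_bar2 (R : realType) (n : nat) (H : rel 'I_n) : R :=
  inf [set k : R | 1 < k /\ exists u, rigid_vector_coloring H k u].

Definition theta2 (R : realType) (n : nat) (G : rel 'I_n) : R :=
  theta_bar2 R (compl_graph G).

Definition theta2'_feasible (R : realType) (n : nat) (G : rel 'I_n) (d : nat)
    (v0 : 'rV[R]_d) (v : 'I_n -> 'rV[R]_d) : Prop :=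
  (forall i, 0 <= dotp v0 (v i)) /\
  (forall i j, G i j -> dotp (v i) (v j) <= 0).

Definition theta2'_value (R : realType) (n : nat) (d : nat)
    (v0 : 'rV[R]_d) (v : 'I_n -> 'rV[R]_d) : R :=
  \sum_(i < n) cfun (v i) v0.

(* Main.v *)
Require Import Defs.
From HB Require Import structures.
From mathcomp Require Import all_boot all_order all_algebra.
From mathcomp Require Import boolp classical_sets reals topology normedtype derive.
From mathcomp Require Import ring lra.
Set Implicit Arguments. Unset Strict Implicit. Unset Printing Implicit Defensive.
Import Order.TTheory GRing.Theory Num.Theory.
Import numFieldNormedType.Exports.

Module M_top.
Local Open Scope ring_scope.
Local Open Scope classical_set_scope.



Section Top.
Variable R : realType.
Variable m : nat.
Definition cont (g : 'rV[R]_m -> R) := continuous g.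

Lemma cont_coord i : cont (fun w => w 0 i).
Proof. exact: coord_continuous. Qed.
Lemma cont_cst c : cont (fun _ => c).
Proof. exact: cst_continuous. Qed.
Lemma cont_add f g : cont f -> cont g -> cont (fun w => f w + g w).
Proof. by move=> cf cg x; exact: (@continuousD _ _ _ f g x (cf x) (cg x)). Qed.
Lemma cont_mul f g : cont f -> cont g -> cont (fun w => f w * g w).
Proof. by move=> cf cg x; exact: (@continuousM _ _ f g x (cf x) (cg x)). Qed.
Lemma cont_opp f : cont f -> cont (fun w => - f w).
Proof. by move=> cf x; exact: (@continuousN _ _ _ f x (cf x)). Qed.
Lemma cont_max f g : cont f -> cont g -> cont (fun w => Num.max (f w) (g w)).
Proof. by move=> cf cg x; exact: (continuous_max (cf x) (cg x)). Qed.
Lemma cont_sum (I : Type) (s : seq I) (F : I -> 'rV[R]_m -> R) :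
  (forall i, cont (F i)) -> cont (fun w => \sum_(i <- s) F i w).
Proof.
move=> cF; elim: s => [|i s IH].
  by under eq_fun do rewrite big_nil; exact: cont_cst.
by under eq_fun do rewrite big_cons; apply: cont_add.
Qed.

Definition sphere := [set w : 'rV[R]_m | \sum_i w 0 i ^+ 2 = 1].

Lemma sphere_min (g : 'rV[R]_m -> R) : (0 < m)%N -> cont g ->
  exists2 w, sphere w & forall w', sphere w' -> g w <= g w'.
Proof.
move=> m0 cg.
have ne : sphere !=set0.
  exists (\row_i (if (i == Ordinal m0) then 1 else 0)).
  rewrite /sphere /= (bigD1 (Ordinal m0)) //= big1 ?mxE ?eqxx ?expr1n ?addr0 //.
  by move=> i /negbTE; rewrite mxE => ->; rewrite expr0n.
have cF : cont (fun w : 'rV[R]_m => \sum_i w 0 i ^+ 2).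
  by apply: cont_sum => i; rewrite /cont; under eq_fun do rewrite expr2; apply: cont_mul; apply: cont_coord.
have clS : closed sphere.
  have := proj1 (continuous_closedP _) cF [set x : R | x = 1] ltac:(apply: closed_eq).
  by congr closed.
have cS : compact sphere.
  apply: (subclosed_compact (B := [set v : 'rV[R]_m | forall i, `[(-1 : R), 1]%classic (v ord0 i)])) => //.
  - exact: (@rV_compact _ m (fun=> `[(-1:R), 1]%classic) (fun=> @segment_compact _ _ _)).
  - move=> w /= Hw i; rewrite /= in_itv /= -ler_norml.
    have : w 0 i ^+ 2 <= 1.
      rewrite -Hw (bigD1 i) //= lerDl; apply: sumr_ge0 => j _; exact: sqr_ge0.
    rewrite -real_normK ?num_real // -[X in _ <= X](expr1n _ 2).
    by rewrite ler_pXn2r // ?nnegrE.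
have [w /set_mem Sw H] := compact_EVT_min ne cS (continuous_subspaceT cg).
by exists w => // w' Sw'; apply: H; apply/mem_set.
Qed.
End Top.

End M_top.
Import M_top.

Module M_chol.
Local Open Scope ring_scope.


Section Chol.
Variable R : realType.

Definition psd n (M : 'M[R]_n) := forall x : 'rV[R]_n, 0 <= (x *m M *m x^T) 0 0.

Lemma e00D (A B : 'M[R]_1) : (A + B) 0 0 = A 0 0 + B 0 0. Proof. by rewrite mxE. Qed.
Lemma e00B (A B : 'M[R]_1) : (A - B) 0 0 = A 0 0 - B 0 0. Proof. by rewrite !mxE. Qed.
Lemma e00Z x (A : 'M[R]_1) : (x *: A) 0 0 = x * A 0 0. Proof. by rewrite mxE. Qed.
Lemma e00s x : (x%:M : 'M[R]_1) 0 0 = x. Proof. by rewrite mxE eqxx mulr1n. Qed.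

Lemma qf_block n (a : 'M[R]_1) (b : 'M[R]_(1, n)) (c : 'M[R]_(n, 1)) (D : 'M[R]_n)
  (u : 'rV[R]_1) (y : 'rV[R]_n) :
  row_mx u y *m block_mx a b c D *m (row_mx u y)^T =
  u *m a *m u^T + y *m c *m u^T + (u *m b *m y^T + y *m D *m y^T).
Proof.
by rewrite mul_row_block tr_row_mx mul_row_col !mulmxDl.
Qed.

Lemma cholesky n (M : 'M[R]_n) : M^T = M -> psd M ->
  exists X : 'M[R]_n, M = X *m X^T.
Proof.
elim: n M => [|n IH] M sM pM.
  by exists 0; rewrite [M]flatmx0 [RHS]flatmx0.
pose M' : 'M[R]_(1 + n) := M.
have EM : M' = block_mx (ulsubmx M') (ursubmx M') (dlsubmx M') (drsubmx M') by rewrite submxK.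
set a := ulsubmx M'; set b := ursubmx M'; set c := dlsubmx M'; set D := drsubmx M'.
have sM' : M'^T = M' by [].
have [ab sD] : b = c^T /\ D^T = D.
  move: sM'; rewrite EM tr_block_mx => H; have [_ h1 _ h2] := eq_block_mx H.
  by split => //; rewrite -h1 trmxK.
have pM' : forall u y, 0 <= ((u *m a *m u^T + y *m c *m u^T + (u *m b *m y^T + y *m D *m y^T)) : 'M_1) 0 0.
  by move=> u y; rewrite -qf_block -EM; apply: (pM (row_mx u y)).
have pD : psd D.
  move=> y; have := pM' 0 y; by rewrite trmx0 !mul0mx !mulmx0 !add0r.
set a0 := a 0 0.
have aE : a = a0%:M by rewrite {1}[a]mx11_scalar.
have a0ge : 0 <= a0.
  have := pM' 1%:M 0; rewrite trmx0 !mul0mx !mulmx0 !addr0 mul1mx tr_scalar_mx mulmx1 aE mxE eqxx mulr1n.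
  by [].
have ycE : forall y : 'rV_n, y *m c = ((y *m c) 0 0)%:M by move=> y; rewrite {1}[y *m c]mx11_scalar.
have byE : forall y : 'rV_n, b *m y^T = ((y *m c) 0 0)%:M.
  by move=> y; rewrite ab -trmx_mul {1}[y *m c]mx11_scalar tr_scalar_mx.
have [c' [cE pS]] : exists c' : 'M[R]_(n, 1), c = Num.sqrt a0 *: c' /\ psd (D - c' *m c'^T).
  have := a0ge; rewrite le_eqVlt => /orP[/eqP a00 | a0pos]; last first.
    exists ((Num.sqrt a0)^-1 *: c); split.
      by rewrite scalerA divff ?scale1r // sqrtr_eq0 -ltNge.

    move=> y.
    pose tau := - ((y *m c) 0 0) / a0.
    have := pM' tau%:M y.
    rewrite aE !mul_scalar_mx tr_scalar_mx !mul_mx_scalar -scalemxAl byE ycE.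
    set r := (y *m c) 0 0; set q := (y *m D *m y^T) 0 0.
    move=> H; rewrite !e00D !e00Z !e00s -/r in H.
    have E1 : y *m (D - (Num.sqrt a0)^-1 *: c *m ((Num.sqrt a0)^-1 *: c)^T) *m y^T
       = y *m D *m y^T - (y *m ((Num.sqrt a0)^-1 *: c)) *m (y *m ((Num.sqrt a0)^-1 *: c))^T.
      by rewrite mulmxBr mulmxBl trmx_mul !mulmxA.
    rewrite E1 -scalemxAr ycE scale_scalar_mx tr_scalar_mx -scalar_mxM e00B e00s -/q.
    have sq : Num.sqrt a0 ^+ 2 = a0 by rewrite sqr_sqrtr // ltW.
    have s0 : Num.sqrt a0 != 0 by rewrite sqrtr_eq0 -ltNge.
    move: H; rewrite /tau -/r.
    have -> : (Num.sqrt a0)^-1 * r * ((Num.sqrt a0)^-1 * r) = r * r / a0.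
      by rewrite -[in RHS]sq; field.
    have a0n : a0 != 0 by rewrite gt_eqF.
    have -> : - r / a0 * (- r / a0 * a0) + - r / a0 * r + (- r / a0 * r + q) = q - r * r / a0.
      by field.
    by [].
  have c0 : c = 0.
    have r0 : forall y : 'rV_n, (y *m c) 0 0 = 0.
      move=> y; have [//|rn0] := eqVneq ((y *m c) 0 0) 0; exfalso.
      pose t := - ((y *m D *m y^T) 0 0 + 1) / (2 * (y *m c) 0 0).
      have := pM' t%:M y.
      rewrite aE !mul_scalar_mx tr_scalar_mx !mul_mx_scalar -scalemxAl byE ycE.
      rewrite !e00D !e00Z !e00s -a00.
      have -> : t * (t * 0) + t * (y *m c) 0 0 + (t * (y *m c) 0 0 + (y *m D *m y^T) 0 0) = -1.
        by rewrite /t; field.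
      by rewrite oppr_ge0 ler10.
    apply/matrixP => i j; rewrite (ord1 j) [RHS]mxE.
    by have := r0 (delta_mx 0 i); rewrite -rowE mxE.
  exists 0; split; first by rewrite c0 scaler0.
  by rewrite mul0mx subr0.
have sS : (D - c' *m c'^T)^T = D - c' *m c'^T.
  by rewrite linearB /= sD trmx_mul trmxK.
have [W HW] := IH _ sS pS.
pose X : 'M_(1 + n) := block_mx (Num.sqrt a0)%:M 0 c' W.
exists X; suff : M' = X *m X^T by [].
rewrite EM /X tr_block_mx mulmx_block trmx0 !mul0mx !mulmx0 !addr0.
rewrite -/a -/b -/c -/D; congr block_mx.
- by rewrite aE tr_scalar_mx -scalar_mxM -expr2 sqr_sqrtr.
- by rewrite ab cE linearZ /= mul_scalar_mx.
- by rewrite tr_scalar_mx mul_mx_scalar cE.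
- by rewrite -HW addrC subrK.
Qed.
End Chol.

End M_chol.
Import M_chol.

Module M_w.
Local Open Scope ring_scope.


Section Dot.
Variable R : realType.

Lemma dotpC d (x y : 'rV[R]_d) : dotp x y = dotp y x.
Proof. by rewrite /dotp; apply: eq_bigr => i _; rewrite mulrC. Qed.

Lemma dotpDl d (x y z : 'rV[R]_d) : dotp (x + y) z = dotp x z + dotp y z.
Proof. by rewrite /dotp -big_split; apply: eq_bigr => i _; rewrite mxE mulrDl. Qed.

Lemma dotpZl d a (x z : 'rV[R]_d) : dotp (a *: x) z = a * dotp x z.
Proof. by rewrite /dotp mulr_sumr; apply: eq_bigr => i _; rewrite mxE mulrA. Qed.

Lemma dotpDr d (x y z : 'rV[R]_d) : dotp z (x + y) = dotp z x + dotp z y.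
Proof. by rewrite dotpC dotpDl !(dotpC z). Qed.

Lemma dotpZr d a (x z : 'rV[R]_d) : dotp z (a *: x) = a * dotp z x.
Proof. by rewrite dotpC dotpZl dotpC. Qed.

Lemma dotp0l d (z : 'rV[R]_d) : dotp 0 z = 0.
Proof. by rewrite -(scale0r 0) dotpZl mul0r. Qed.

Lemma dotp0r d (z : 'rV[R]_d) : dotp z 0 = 0.
Proof. by rewrite dotpC dotp0l. Qed.

Lemma dotp_suml d (I : Type) (s : seq I) (F : I -> 'rV[R]_d) z :
  dotp (\sum_(i <- s) F i) z = \sum_(i <- s) dotp (F i) z.
Proof.
elim: s => [|i s IH]; first by rewrite !big_nil dotp0l.
by rewrite !big_cons dotpDl IH.
Qed.

Lemma dotp_sumr d (I : Type) (s : seq I) (F : I -> 'rV[R]_d) z :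
  dotp z (\sum_(i <- s) F i) = \sum_(i <- s) dotp z (F i).
Proof. by rewrite dotpC dotp_suml; apply: eq_bigr => i _; rewrite dotpC. Qed.

Lemma dotp_ge0 d (x : 'rV[R]_d) : 0 <= dotp x x.
Proof. by apply: sumr_ge0 => i _; rewrite -expr2 sqr_ge0. Qed.

Lemma dotp_eq0 d (x : 'rV[R]_d) : dotp x x = 0 -> x = 0.
Proof.
move=> /eqP; rewrite /dotp psumr_eq0 => [/allP H|i _]; last by rewrite -expr2 sqr_ge0.
apply/rowP => i; rewrite mxE; have := H i (mem_index_enum _).
by rewrite /= mulf_eq0 orbb => /eqP.
Qed.

Lemma dotp_gt0 d (x : 'rV[R]_d) : x != 0 -> 0 < dotp x x.
Proof.
move=> x0; rewrite lt_neqAle dotp_ge0 andbT; apply/eqP => H.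
by move: x0; rewrite (dotp_eq0 (esym H)) eqxx.
Qed.

Lemma CS d (x y : 'rV[R]_d) : dotp x y ^+ 2 <= dotp x x * dotp y y.
Proof.
have [->|x0] := eqVneq x 0; first by rewrite !dotp0l expr0n mul0r.
have X0 := dotp_gt0 x0.
set X := dotp x x; set p := dotp x y; set Y := dotp y y.
have := dotp_ge0 (X *: y + (- p) *: x).
rewrite !dotpDl !dotpDr !dotpZl !dotpZr -/X -/Y (dotpC y x) -/p.
have -> : X * (X * Y) + X * (- p * p) + (- p * (X * p) + - p * (- p * X)) = X * (X * Y - p ^+ 2) by ring.
by rewrite pmulr_rge0 // subr_ge0.
Qed.

Lemma cfun_ge0 d (x y : 'rV[R]_d) : 0 <= cfun x y.
Proof.
rewrite /cfun; case: ifP => // _; apply: divr_ge0; first exact: sqr_ge0.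
by apply: mulr_ge0; apply: dotp_ge0.
Qed.

Lemma cfun_le1 d (x y : 'rV[R]_d) : cfun x y <= 1.
Proof.
rewrite /cfun; case: ifP => // /andP [x0 y0].
by rewrite ler_pdivrMr ?mul1r ?CS // mulr_gt0 // dotp_gt0.
Qed.

Lemma schur n d m (y : 'I_n -> 'rV[R]_d) (u : 'I_n -> 'rV[R]_m) :
  0 <= \sum_i \sum_j dotp (y i) (y j) * dotp (u i) (u j).
Proof.
have -> : \sum_i \sum_j dotp (y i) (y j) * dotp (u i) (u j) =
  \sum_p \sum_q (\sum_i y i 0 p * u i 0 q) ^+ 2.
  rewrite /dotp.
  transitivity (\sum_i \sum_j \sum_p \sum_q (y i 0 p * u i 0 q) * (y j 0 p * u j 0 q)).
    apply: eq_bigr => i _; apply: eq_bigr => j _.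
    rewrite mulr_suml; apply: eq_bigr => p _; rewrite mulr_sumr.
    by apply: eq_bigr => q _; ring.
  transitivity (\sum_i \sum_p \sum_q \sum_j (y i 0 p * u i 0 q) * (y j 0 p * u j 0 q)).
    apply: eq_bigr => i _; rewrite exchange_big; apply: eq_bigr => p _.
    by rewrite exchange_big.
  rewrite exchange_big; apply: eq_bigr => p _; rewrite exchange_big.
  apply: eq_bigr => q _; rewrite expr2 mulr_suml; apply: eq_bigr => i _.
  by rewrite mulr_sumr.
by apply: sumr_ge0 => p _; apply: sumr_ge0 => q _; apply: sqr_ge0.
Qed.

End Dot.

End M_w.
Import M_w.

Module M_w2.
Local Open Scope ring_scope.


Section Weak.
Variable R : realType.

Lemma weak n (G : rel 'I_n) d (v0 : 'rV[R]_d) (v : 'I_n -> 'rV[R]_d) k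
  (u : 'I_n -> 'rV[R]_n) :
  theta2'_feasible G v0 v -> 1 < k -> rigid_vector_coloring (compl_graph G) k u ->
  theta2'_value v0 v <= k.
Proof.
move=> [f1 f2] k1 [u1 [u2 u3]].
have [->|v00] := eqVneq v0 0.
  rewrite /theta2'_value big1 ?(le_trans _ (ltW k1)) // => i _.
  by rewrite /cfun eqxx andbF.
have V0pos := dotp_gt0 v00.
set V0 := dotp v0 v0 in V0pos.
pose beta i := if v i != 0 then dotp (v i) v0 / dotp (v i) (v i) else 0.
pose y i := beta i *: v i.
pose c i := cfun (v i) v0.
have b0 i : 0 <= beta i.
  rewrite /beta; case: ifP => // _; apply: divr_ge0; last exact: dotp_ge0.
  by rewrite dotpC.
have yv0 i : dotp (y i) v0 = c i * V0.
  rewrite /y /c /beta /cfun v00 andbT dotpZl; case: ifP => vi0; last by rewrite mul0r mul0r.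
  have h := dotp_gt0 vi0; set p := dotp (v i) v0.
  have h1 : dotp (v i) (v i) != 0 by rewrite gt_eqF.
  have h2 : V0 != 0 by rewrite gt_eqF.
  by rewrite /V0; field; rewrite -/V0; apply/andP; split.
have yy i : dotp (y i) (y i) = c i * V0.
  rewrite /y /c /beta /cfun v00 andbT dotpZl dotpZr; case: ifP => vi0; last by rewrite !mul0r.
  have h := dotp_gt0 vi0; set p := dotp (v i) v0.
  have h1 : dotp (v i) (v i) != 0 by rewrite gt_eqF.
  have h2 : V0 != 0 by rewrite gt_eqF.
  by rewrite /V0; field; rewrite -/V0; apply/andP; split.
have yE i j : G i j -> dotp (y i) (y j) <= 0.
  move=> gij; rewrite /y dotpZl dotpZr.
  by apply: mulr_ge0_le0 => //; apply: mulr_ge0_le0 => //; apply: f2.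
have c0 i : 0 <= c i by apply: cfun_ge0.
set S := theta2'_value v0 v.
have S0 : 0 <= S by apply: sumr_ge0 => i _; apply: cfun_ge0.
pose t := (k - 1)^-1.
have t0 : 0 < t by rewrite invr_gt0 subr_gt0.
set Ys := \sum_i y i.
have E1 : \sum_i \sum_j dotp (y i) (y j) = dotp Ys Ys.
  rewrite /Ys dotp_suml; apply: eq_bigr => i _; by rewrite dotp_sumr.
have Q1 : t * dotp Ys Ys <= \sum_i \sum_j dotp (y i) (y j) * (dotp (u i) (u j) + t).
  have -> : \sum_i \sum_j dotp (y i) (y j) * (dotp (u i) (u j) + t) =
    \sum_i \sum_j dotp (y i) (y j) * dotp (u i) (u j) + t * dotp Ys Ys.
    rewrite -E1 mulr_sumr -big_split; apply: eq_bigr => i _.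
    rewrite mulr_sumr -big_split; apply: eq_bigr => j _.
    by rewrite /= mulrDr (mulrC t).
  by rewrite lerDr; apply: schur.
have Q2 : \sum_i \sum_j dotp (y i) (y j) * (dotp (u i) (u j) + t) <= (1 + t) * (V0 * S).
  have -> : (1 + t) * (V0 * S) = \sum_i \sum_j (if j == i then (1 + t) * dotp (y i) (y i) else 0).
    rewrite /S /theta2'_value !mulr_sumr; apply: eq_bigr => i _.
    rewrite -big_mkcond big_pred1_eq yy /c; ring.
  apply: ler_sum => i _; apply: ler_sum => j _.
  case: eqP => [->|/eqP ji]; first by rewrite u1 mulrC.
  case gij: (G i j).
    apply: mulr_le0_ge0; first exact: yE.
    have h := u3 i j ltac:(by rewrite eq_sym) ltac:(by rewrite /compl_graph gij andbF).
    by rewrite /t; move: h; set z := (k - 1)^-1; lra.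
  rewrite u2 ?addNr ?mulr0 // /compl_graph gij andbT eq_sym //.
have E2 : dotp Ys v0 = V0 * S.
  rewrite /Ys dotp_suml /S /theta2'_value mulr_sumr; apply: eq_bigr => i _; by rewrite yv0 mulrC.
have cs := CS Ys v0; rewrite E2 -/V0 in cs.
have H : t * (V0 * S) ^+ 2 <= (1 + t) * (V0 * S) * V0.
  apply: (le_trans (ler_wpM2l (ltW t0) cs)).
  rewrite mulrA ler_wpM2r //; first exact: ltW.
  exact: (le_trans Q1 Q2).
have H2 : t * S ^+ 2 <= (1 + t) * S.
  have V02 : 0 < V0 ^+ 2 by rewrite exprn_gt0.
  rewrite -(ler_pM2r V02); move: H; congr (_ <= _); ring.
have tk : t * (k - 1) = 1 by rewrite mulVf // subr_eq0 gt_eqF.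
have [->|Spos] := eqVneq S 0; first by rewrite ltW // (lt_trans ltr01).
have Sp : 0 < S by rewrite lt_neqAle eq_sym Spos S0.
have H3 : t * S <= 1 + t.
  by rewrite -(ler_pM2r Sp); move: H2; congr (_ <= _); ring.
have : (k - 1) * (t * S) <= (k - 1) * (1 + t) by rewrite ler_pM2l // subr_gt0.
have -> : (k - 1) * (t * S) = S by rewrite mulrA (mulrC (k - 1)) tk mul1r.
by have -> : (k - 1) * (1 + t) = k by rewrite mulrDr mulr1 (mulrC _ t) tk; ring.
Qed.
End Weak.

End M_w2.
Import M_w2.

Module M_w3.
Local Open Scope ring_scope.


Section Conv.
Variable R : realType.

Lemma pointwise d (x s : 'rV[R]_d) (l : R) : 0 < l -> s != 0 -> l = dotp s s ->
  2 * l * dotp x s - l ^+ 2 * dotp x x <=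
  cfun (if 0 <= dotp x s then x else 0) s * l.
Proof.
move=> l0 s0 lE.
case: ifP => a0; last first.
  rewrite /cfun eqxx /= mul0r subr_le0.
  apply: le_trans (_ : 0 <= _); last by apply: mulr_ge0; [apply: sqr_ge0|apply: dotp_ge0].
  have : dotp x s < 0 by rewrite ltNge a0.
  by move=> h; rewrite pmulr_rle0 ?mulr_gt0 // ltW.
have [->|x0] := eqVneq x 0.
  by rewrite /cfun eqxx /= mul0r !dotp0l !mulr0 subrr.
rewrite /cfun x0 s0 /= -lE.
have b0 := dotp_gt0 x0.
set a := dotp x s; set b := dotp x x.
have -> : a ^+ 2 / (b * l) * l = a ^+ 2 / b by field; rewrite !gt_eqF.
rewrite ler_pdivlMr //.
rewrite -subr_ge0.
have -> : a ^+ 2 - (2 * l * a - l ^+ 2 * b) * b = (a - l * b) ^+ 2 by ring.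
exact: sqr_ge0.
Qed.

Lemma convert n (G : rel 'I_n) (X : 'M[R]_n) k : 0 < k ->
  \sum_i \sum_j X i j ^+ 2 = 1 ->
  (forall i j, G i j -> dotp (row i X) (row j X) <= 0) ->
  k <= dotp (\sum_i row i X) (\sum_i row i X) ->
  exists (v0 : 'rV[R]_n) (v : 'I_n -> 'rV[R]_n),
    theta2'_feasible G v0 v /\ k <= theta2'_value v0 v.
Proof.
move=> k0 X1 XE ks.
pose s := \sum_(i < n) row i X.
pose l := dotp s s.
have {}ks : k <= l by [].
have l0 : 0 < l by apply: lt_le_trans ks.
have s0 : s != 0 by apply/eqP => h; move: l0; rewrite /l h dotp0l ltxx.
pose v i := if 0 <= dotp (row i X) s then row i X else 0.
exists s, v; split.
  split.
    by move=> i; rewrite /v; case: ifP => h; [rewrite dotpC | rewrite dotp0r].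
  move=> i j gij; rewrite /v; case: ifP => _; last by rewrite dotp0l.
  by case: ifP => _; [apply: XE | rewrite dotp0r].
have H : \sum_i (2 * l * dotp (row i X) s - l ^+ 2 * dotp (row i X) (row i X))
   <= theta2'_value s v * l.
  rewrite /theta2'_value mulr_suml; apply: ler_sum => i _.
  exact: pointwise.
have Sa : \sum_i dotp (row i X) s = l by rewrite /l {2}/s dotp_suml.
have Sb : \sum_i dotp (row i X) (row i X) = 1.
  rewrite -X1; apply: eq_bigr => i _; rewrite /dotp; apply: eq_bigr => j _.
  by rewrite !mxE expr2.
rewrite sumrB -mulr_sumr -mulr_sumr Sa Sb in H.
apply: (le_trans ks).
rewrite -(ler_pM2r l0); apply: le_trans H; rewrite -subr_ge0.
have -> : 2 * l * l - l ^+ 2 * 1 - l * l = 0 by ring.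
by [].
Qed.

End Conv.

End M_w3.
Import M_w3.

Module M_k1.
Local Open Scope ring_scope.


Section K1.
Variable R : realType.

Definition fp (x : R) := Num.max 0 x.
Definition fsq (x : R) := fp x ^+ 2.

Lemma fpE x : fp x = if 0 <= x then x else 0.
Proof. by rewrite /fp maxEle. Qed.

Lemma fp_ge0 x : 0 <= fp x. Proof. by rewrite fpE; case: ifP. Qed.

Lemma fpM x : fp x * x = fp x ^+ 2.
Proof.
rewrite fpE; case: ifP => h; first by rewrite expr2.
by rewrite mul0r expr0n.
Qed.

Lemma fsq_bound x dd : fsq (x + dd) <= fsq x + 2 * fp x * dd + dd ^+ 2.
Proof.
rewrite /fsq !fpE; case: (leP 0 x) => hx; case: (leP 0 (x + dd)) => hxd.
- by rewrite le_eqVlt; apply/orP; left; apply/eqP; ring.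
- rewrite expr0n /=.
  have -> : x ^+ 2 + 2 * x * dd + dd ^+ 2 = (x + dd) ^+ 2 by ring.
  exact: sqr_ge0.
- rewrite expr0n /= mulr0 mul0r !add0r.
  rewrite -subr_ge0.
  have -> : dd ^+ 2 - (x + dd) ^+ 2 = (- x) * (x + dd + dd) by ring.
  apply: mulr_ge0; first by rewrite oppr_ge0 ltW.
  lra.
- rewrite expr0n /= mulr0 mul0r !add0r.
  exact: sqr_ge0.
Qed.

Lemma small_t (L C : R) : 0 <= C ->
  (forall t, 0 < t -> t <= 1 -> 0 <= t * L + t ^+ 2 * C) -> 0 <= L.
Proof.
move=> C0 H; rewrite leNgt; apply/negP => L0.
have d0 : 0 < - L + C by rewrite -oppr_gt0 in L0; lra.
pose t := - L / (- L + C).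
have t0 : 0 < t by rewrite divr_gt0 // oppr_gt0.
have t1 : t <= 1 by rewrite ler_pdivrMr // mul1r; lra.
have := H t t0 t1.
have -> : t * L + t ^+ 2 * C = t * (- L ^+ 2 / (- L + C)).
  by rewrite /t; field; rewrite gt_eqF.
rewrite pmulr_rge0 //.
have : 0 < L ^+ 2 / (- L + C) by rewrite divr_gt0 // -sqrrN exprn_gt0 // oppr_gt0.
by rewrite mulNr oppr_ge0 leNgt => ->.
Qed.

Lemma gram_dotp n d (X : 'M[R]_(n, d)) i j : dotp (row i X) (row j X) = (X *m X^T) i j.
Proof. by rewrite /dotp mxE; apply: eq_bigr => l _; rewrite !mxE. Qed.

Lemma qfE n (y : 'rV[R]_n) (M : 'M[R]_n) :
  (y *m M *m y^T) 0 0 = \sum_i \sum_j y 0 i * y 0 j * M i j.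
Proof.
rewrite mxE exchange_big; apply: eq_bigr => i _; rewrite mxE mulr_suml.
by apply: eq_bigr => j _; rewrite !mxE; ring.
Qed.

Lemma frob_mxvec n (X : 'M[R]_n) :
  \sum_p (mxvec X) 0 p ^+ 2 = \sum_i \sum_j X i j ^+ 2.
Proof.
rewrite (reindex _ (curry_mxvec_bij _ _)) /= pair_bigA /=.
by apply: eq_bigr => [[i j]] _ /=; rewrite mxvecE.
Qed.

Lemma trace_gram n (X : 'M[R]_n) : \sum_i (X *m X^T) i i = \sum_i \sum_j X i j ^+ 2.
Proof. by apply: eq_bigr => i _; rewrite -gram_dotp /dotp; apply: eq_bigr => j _; rewrite !mxE expr2. Qed.

Lemma sum_delta n (i0 : 'I_n) (F : 'I_n -> R) :
  \sum_i (delta_mx 0 i0 : 'rV[R]_n) 0 i * F i = F i0.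
Proof.
rewrite (bigD1 i0) //= big1 ?addr0 ?mxE ?eqxx ?mul1r // => i /negbTE h.
by rewrite mxE h andbF mul0r.
Qed.

End K1.

End M_k1.
Import M_k1.

Module M_k2.
Local Open Scope ring_scope.


Section K2.
Variable R : realType.
Variable n : nat.
Variable G : rel 'I_n.

Definition sG (F : 'I_n -> 'I_n -> R) := \sum_i \sum_j (if G i j then F i j else 0).

Lemma sG_add F1 F2 : sG (fun i j => F1 i j + F2 i j) = sG F1 + sG F2.
Proof.
rewrite /sG -big_split; apply: eq_bigr => i _; rewrite -big_split.
by apply: eq_bigr => j _; case: (G i j); rewrite /= ?addr0.
Qed.

Lemma sG_scale c F : sG (fun i j => c * F i j) = c * sG F.
Proof.
rewrite /sG mulr_sumr; apply: eq_bigr => i _; rewrite mulr_sumr.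
by apply: eq_bigr => j _; case: (G i j); rewrite ?mulr0.
Qed.

Lemma sG_opp F : sG (fun i j => - F i j) = - sG F.
Proof. by rewrite -mulN1r -sG_scale; apply: eq_bigr => i _; apply: eq_bigr => j _; rewrite mulN1r. Qed.

Lemma sG_le F1 F2 : (forall i j, G i j -> F1 i j <= F2 i j) -> sG F1 <= sG F2.
Proof.
move=> H; apply: ler_sum => i _; apply: ler_sum => j _.
by case E: (G i j) => //; apply: H.
Qed.

Lemma sG_ge0 F : (forall i j, G i j -> 0 <= F i j) -> 0 <= sG F.
Proof.
move=> H; apply: sumr_ge0 => i _; apply: sumr_ge0 => j _.
by case E: (G i j) => //; apply: H.
Qed.

Lemma sG_eq F1 F2 : (forall i j, G i j -> F1 i j = F2 i j) -> sG F1 = sG F2.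
Proof.
move=> H; apply: eq_bigr => i _; apply: eq_bigr => j _.
by case E: (G i j) => //; apply: H.
Qed.

Definition phi (B : 'M[R]_n) := \sum_i \sum_j B i j.

Lemma phi_lin (B D : 'M[R]_n) (F : 'I_n -> 'I_n -> R) t :
  (forall i j, F i j = B i j + t * D i j) ->
  \sum_i \sum_j F i j = phi B + t * phi D.
Proof.
move=> H; rewrite /phi mulr_sumr -big_split; apply: eq_bigr => i _.
rewrite mulr_sumr -big_split; apply: eq_bigr => j _; exact: H.
Qed.

Definition psd' (M : 'M[R]_n) := forall x : 'rV[R]_n, 0 <= (x *m M *m x^T) 0 0.

Lemma psd_gram d (X : 'M[R]_(n, d)) : psd' (X *m X^T).
Proof.
move=> x; have -> : x *m (X *m X^T) *m x^T = (x *m X) *m (x *m X)^T.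
  by rewrite trmx_mul !mulmxA.
by rewrite -gram_dotp dotp_ge0.
Qed.

End K2.

End M_k2.
Import M_k2.

Module M_k3.
Local Open Scope ring_scope.


Section K3.
Variable R : realType.
Variable n : nat.
Variable G : rel 'I_n.
Variable k : R.

Definition frob (X : 'M[R]_n) := \sum_i \sum_j X i j ^+ 2.
Definition hh (B : 'M[R]_n) := fsq (k - phi B) + sG G (fun i j => fsq (B i j)).

Variable X0 : 'M[R]_n.
Hypothesis X01 : frob X0 = 1.
Hypothesis X0min : forall X : 'M[R]_n, frob X = 1 -> hh (X0 *m X0^T) <= hh (X *m X^T).

Let B0 := X0 *m X0^T.
Let al := fp (k - phi B0).
Let mu i j := fp (B0 i j).
Let h0 := hh B0.

Lemma sumsq (z : 'I_n -> R) : \sum_i \sum_j z i * z j = (\sum_i z i) ^+ 2.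
Proof. by rewrite expr2 mulr_suml; apply: eq_bigr => i _; rewrite mulr_sumr. Qed.

Lemma sep (z : 'rV[R]_n) : \sum_i z 0 i ^+ 2 = 1 ->
  al * (\sum_i z 0 i) ^+ 2 - sG G (fun i j => mu i j * (z 0 i * z 0 j)) <= al * k - h0.
Proof.
move=> z1.
pose P := z^T *m z.
have PE i j : P i j = z 0 i * z 0 j by rewrite mxE big_ord1 !mxE.
pose Dm := P - B0.
have DE i j : Dm i j = z 0 i * z 0 j - B0 i j by rewrite -PE !mxE.
pose phiD := phi Dm.
pose L := - 2 * al * phiD + sG G (fun i j => 2 * mu i j * Dm i j).
pose C := phiD ^+ 2 + sG G (fun i j => Dm i j ^+ 2).
have C0 : 0 <= C by apply: addr_ge0; [apply: sqr_ge0 | apply: sG_ge0 => i j _; apply: sqr_ge0].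
have trB0 : \sum_i B0 i i = 1 by rewrite /B0 trace_gram.
have L0 : 0 <= L.
  apply: (small_t C0) => t t0 t1.
  pose Bt := (1 - t) *: B0 + t *: P.
  have BtE i j : Bt i j = B0 i j + t * Dm i j by rewrite DE -PE !mxE; ring.
  have sBt : Bt^T = Bt.
    by rewrite /Bt linearD /= !linearZ /= /B0 /P !trmx_mul !trmxK.
  have pBt : psd Bt.
    move=> x; rewrite /Bt mulmxDr mulmxDl -!scalemxAr -!scalemxAl e00D !e00Z.
    apply: addr_ge0; apply: mulr_ge0; try lra.
    - exact: psd_gram.
    - by have := psd_gram (z^T) x; rewrite trmxK.
  have [Xt XtE] := cholesky sBt pBt.
  have fXt : frob Xt = 1.
    rewrite /frob -trace_gram -XtE.
    under eq_bigr do rewrite BtE.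
    rewrite big_split /= -mulr_sumr trB0.
    under eq_bigr do rewrite DE.
    rewrite sumrB trB0.
    by rewrite (eq_bigr (fun i => z 0 i ^+ 2)) ?z1 ?subrr ?mulr0 ?addr0 // => i _; rewrite expr2.
  have := X0min fXt; rewrite -XtE -/B0 => hle.
  rewrite -(lerD2l h0) addr0; apply: (le_trans hle).
  have phiBt : phi Bt = phi B0 + t * phiD := phi_lin BtE.
  rewrite /hh phiBt.
  have e1 : k - (phi B0 + t * phiD) = (k - phi B0) + (- (t * phiD)) by ring.
  rewrite e1.
  have h1 := fsq_bound (k - phi B0) (- (t * phiD)).
  have h2 : sG G (fun i j => fsq (Bt i j)) <= sG G (fun i j => fsq (B0 i j) + 2 * mu i j * (t * Dm i j) + (t * Dm i j) ^+ 2).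
    by apply: sG_le => i j _; rewrite BtE; exact: fsq_bound.
  apply: le_trans (lerD h1 h2) _.
  rewrite !sG_add.
  have -> : sG G (fun i j => 2 * mu i j * (t * Dm i j)) = t * sG G (fun i j => 2 * mu i j * Dm i j).
    by rewrite -sG_scale; apply: sG_eq => i j _; ring.
  have -> : sG G (fun i j => (t * Dm i j) ^+ 2) = t ^+ 2 * sG G (fun i j => Dm i j ^+ 2).
    by rewrite -sG_scale; apply: sG_eq => i j _; ring.
  rewrite /h0 /hh /L /C -/al.
  rewrite le_eqVlt; apply/orP; left; apply/eqP.
  set A := fsq (k - phi B0); set S1 := sG G (fun i j => fsq (B0 i j)).
  set S2 := sG G (fun i j => 2 * mu i j * Dm i j); set S3 := sG G (fun i j => Dm i j ^+ 2).
  clear -A; move: A S1 S2 S3 al phiD t => A S1 S2 S3 a p tt.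
  ring.
have phiP : phi P = (\sum_i z 0 i) ^+ 2.
  by rewrite -sumsq; apply: eq_bigr => i _; apply: eq_bigr => j _; rewrite PE.
have phiDE : phiD = phi P - phi B0.
  rewrite /phiD /phi -sumrB; apply: eq_bigr => i _; rewrite -sumrB.
  by apply: eq_bigr => j _; rewrite !mxE.
have S2E : sG G (fun i j => 2 * mu i j * Dm i j) =
    2 * (sG G (fun i j => mu i j * (z 0 i * z 0 j)) - sG G (fun i j => mu i j ^+ 2)).
  rewrite -sG_opp -sG_add -sG_scale; apply: sG_eq => i j _.
  rewrite DE /mu -fpM; ring.
have h0E : h0 = al ^+ 2 + sG G (fun i j => mu i j ^+ 2) by [].
have alE : al * (k - phi B0) = al ^+ 2 by rewrite /al fpM.
move: L0; rewrite /L S2E phiDE phiP h0E.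
move: alE; set Q := (\sum_i z 0 i) ^+ 2; set Szz := sG G _; set S2 := sG G _.
set p0 := phi B0; move: al => a.
clear. move=> alE L0.
have e : a * Q - Szz <= a * k - (a ^+ 2 + S2).
  rewrite -subr_ge0; have -> : a * k - (a ^+ 2 + S2) - (a * Q - Szz) = (-2 * a * (Q - p0) + 2 * (Szz - S2)) / 2 + (a * (k - p0) - a ^+ 2).
    by field.
  by rewrite alE subrr addr0 divr_ge0.
exact: e.
Qed.

End K3.

End M_k3.
Import M_k3.

Module M_k4.
Local Open Scope ring_scope.


Section K4.
Variable R : realType.
Variable n : nat.
Variable G : rel 'I_n.
Variable k : R.
Hypothesis n0 : (0 < n)%N.

Lemma cont_fsq m (F : 'rV[R]_m -> R) : cont F -> cont (fun w => fsq (F w)).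
Proof.
move=> cF; rewrite /fsq /fp; under eq_fun do rewrite expr2.
by apply: cont_mul; apply: cont_max => //; apply: cont_cst.
Qed.

Lemma minimizer : exists2 X0 : 'M[R]_n, frob X0 = 1 &
  forall X : 'M[R]_n, frob X = 1 -> hh G k (X0 *m X0^T) <= hh G k (X *m X^T).
Proof.
pose g (w : 'rV[R]_(n * n)) := hh G k (vec_mx w *m (vec_mx w)^T).
have ent : forall i j, cont (fun w : 'rV[R]_(n * n) => (vec_mx w *m (vec_mx w)^T) i j).
  move=> i j; under eq_fun do rewrite mxE.
  apply: cont_sum => l; under eq_fun do rewrite !mxE.
  by apply: cont_mul; apply: cont_coord.
have cg : cont g.
  rewrite /g /hh; apply: cont_add.
    apply: cont_fsq; apply: cont_add; first exact: cont_cst.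
    by apply: cont_opp; apply: cont_sum => i; apply: cont_sum => j; apply: ent.
  apply: cont_sum => i; apply: cont_sum => j.
  by case: (G i j); [apply: cont_fsq; apply: ent | apply: cont_cst].
have nn : (0 < n * n)%N by rewrite muln_gt0 n0.
have [w Sw H] := sphere_min nn cg.
have frobE (X : 'M[R]_n) : frob X = \sum_p (mxvec X) 0 p ^+ 2 by rewrite frob_mxvec.
exists (vec_mx w).
  by rewrite frobE vec_mxK.
move=> X fX; have := H (mxvec X); rewrite /g mxvecK; apply.
by rewrite /sphere /= -frobE.
Qed.

End K4.

End M_k4.
Import M_k4.

Module M_k5.
Local Open Scope ring_scope.


Section K5.
Variable R : realType.
Variable n : nat.
Variable G : rel 'I_n.

Lemma sG_term (F : 'I_n -> 'I_n -> R) i0 j0 : (forall i j, G i j -> 0 <= F i j) -> G i0 j0 ->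
  F i0 j0 <= sG G F.
Proof.
move=> H g0; rewrite /sG (bigD1 i0) //= (bigD1 j0) //= g0 -addrA lerDl.
apply: addr_ge0; first by apply: sumr_ge0 => j _; case E: (G i0 j) => //; apply: H.
apply: sumr_ge0 => i _; apply: sumr_ge0 => j _; case E: (G i j) => //; exact: H.
Qed.

Lemma sum_diag (x : 'I_n -> R) i : \sum_j x i * x j * (i == j)%:R = x i ^+ 2.
Proof.
rewrite (bigD1 i) //= eqxx mulr1 big1 ?addr0 ?expr2 // => j /negbTE h.
by rewrite eq_sym h mulr0.
Qed.

Lemma qf_split (x : 'I_n -> R) (a b c : R) (M : 'I_n -> 'I_n -> R) :
  \sum_i \sum_j x i * x j * (a * (i == j)%:R + b + c * M i j) =
  a * \sum_i x i ^+ 2 + b * (\sum_i x i) ^+ 2 + c * \sum_i \sum_j x i * x j * M i j.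
Proof.
rewrite -sumsq !mulr_sumr -!big_split; apply: eq_bigr => i _ /=.
rewrite -sum_diag !mulr_sumr -!big_split; apply: eq_bigr => j _ /=; ring.
Qed.

Lemma sG_qf (x : 'I_n -> R) (mu : 'I_n -> 'I_n -> R) :
  \sum_i \sum_j x i * x j * (if G i j then mu i j else 0) = sG G (fun i j => mu i j * (x i * x j)).
Proof.
by apply: eq_bigr => i _; apply: eq_bigr => j _; case: (G i j); rewrite ?mulr0 // mulrC.
Qed.

End K5.

End M_k5.
Import M_k5.

Module M_k6.
Local Open Scope ring_scope.


Section K6.
Variable R : realType.
Variable n : nat.
Variable G : rel 'I_n.
Variable k : R.
Hypothesis n0 : (0 < n)%N.
Hypothesis Gsym : forall i j, G i j = G j i.
Hypothesis Girr : forall i, G i i = false.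

Lemma key :
  (exists X : 'M[R]_n, frob X = 1 /\ (forall i j, G i j -> dotp (row i X) (row j X) <= 0) /\
      k <= dotp (\sum_i row i X) (\sum_i row i X)) \/
  (exists k', k' < k /\ 1 < k' /\ exists u : 'I_n -> 'rV[R]_n,
      rigid_vector_coloring (compl_graph G) k' u).
Proof.
have [X0 X01 X0min] := minimizer G k n0.
pose B0 := X0 *m X0^T.
pose al := fp (k - phi B0).
pose mu i j := fp (B0 i j).
pose h0 := hh G k B0.
have sepz := sep X01 X0min.
have h0E : h0 = al ^+ 2 + sG G (fun i j => mu i j ^+ 2) by [].
have al0 : 0 <= al by apply: fp_ge0.
have S20 : 0 <= sG G (fun i j => mu i j ^+ 2) by apply: sG_ge0 => i j _; apply: sqr_ge0.
have h00 : 0 <= h0 by rewrite h0E addr_ge0 // sqr_ge0.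
have B0E i j : dotp (row i X0) (row j X0) = B0 i j by rewrite gram_dotp.
have [h0z|h0p] := eqVneq h0 0.
  left; exists X0; split => //; split.
    move=> i j gij; rewrite B0E.
    have : mu i j ^+ 2 <= 0.
      rewrite -h0z h0E; apply: (le_trans (sG_term (F := fun i j => mu i j ^+ 2) _ gij)).
        by move=> ? ? _; apply: sqr_ge0.
      by rewrite lerDr sqr_ge0.
    rewrite /mu fpE; case: ifP => h; last by move=> _; rewrite ltW // ltNge h.
    move=> hsq; have : B0 i j ^+ 2 == 0 by rewrite eq_le hsq sqr_ge0.
    by rewrite sqrf_eq0 => /eqP ->.
  have al00 : al = 0.
    have : al ^+ 2 <= 0 by rewrite -h0z h0E lerDl.
    move=> hsq; have : al ^+ 2 == 0 by rewrite eq_le hsq sqr_ge0.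
    by rewrite sqrf_eq0 => /eqP.
  have kp : k - phi B0 <= 0.
    move: al00; rewrite /al fpE; case: ifP => h; first by move=> ->.
    by move=> _; rewrite ltW // ltNge h.
  have -> : dotp (\sum_i row i X0) (\sum_i row i X0) = phi B0.
    rewrite dotp_suml; apply: eq_bigr => i _; rewrite dotp_sumr.
    by apply: eq_bigr => j _; rewrite B0E.
  by rewrite -subr_le0.
right.
have h0pos : 0 < h0 by rewrite lt_neqAle eq_sym h0p h00.
pose i0 := Ordinal n0.
pose e : 'rV[R]_n := delta_mx 0 i0.
have e1 : \sum_i e 0 i ^+ 2 = 1.
  under eq_bigr do rewrite expr2; by rewrite sum_delta mxE !eqxx.
have es : \sum_i e 0 i = 1.
  under eq_bigr do rewrite -[e 0 _]mulr1; by rewrite (sum_delta i0 (fun=> 1)).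
have eG : sG G (fun i j => mu i j * (e 0 i * e 0 j)) = 0.
  rewrite -(sG_qf G (fun i => e 0 i)).
  under eq_bigr do under eq_bigr do rewrite -mulrA.
  under eq_bigr do rewrite -mulr_sumr.
  by rewrite sum_delta sum_delta Girr.
have se : al <= al * k - h0.
  by have := sepz e e1; rewrite es eG expr1n mulr1 subr0.
have alp : 0 < al.
  rewrite lt_neqAle al0 andbT; apply/eqP => a0; move: se; rewrite -a0 mul0r sub0r.
  by rewrite oppr_ge0 leNgt h0pos.
pose eps := h0 / (2 * al).
pose k' := k - eps.
have epsp : 0 < eps by rewrite divr_gt0 // mulr_gt0.
have hk : h0 <= al * (k - 1).
  by rewrite mulrBr mulr1 lerBrDl addrC -lerBrDl.
have k'1 : eps <= k' - 1.
  have : 2 * eps <= k - 1.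
    have -> : 2 * eps = h0 / al by rewrite /eps; field; rewrite gt_eqF.
    by rewrite ler_pdivrMr // mulrC.
  rewrite /k'; lra.
have k'p : 0 < k' - 1 by apply: lt_le_trans k'1.
have gen (y : 'rV[R]_n) : al * (\sum_i y 0 i) ^+ 2 - sG G (fun i j => mu i j * (y 0 i * y 0 j))
    <= (al * k - h0) * \sum_i y 0 i ^+ 2.
  have ny0 : 0 <= \sum_i y 0 i ^+ 2 by apply: sumr_ge0 => i _; apply: sqr_ge0.
  have [yz|ynz] := eqVneq y 0.
    have -> : sG G (fun i j => mu i j * (y 0 i * y 0 j)) = 0 * sG G (fun i j => 1).
      rewrite -sG_scale; apply: sG_eq => i j _; rewrite yz !mxE; ring.
    rewrite yz; under eq_bigr do rewrite mxE.
    rewrite big1 // expr0n /= mulr0 mul0r subr0 big1 ?mulr0 // => i _; by rewrite mxE expr0n.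
  have nyp : 0 < \sum_i y 0 i ^+ 2.
    have := dotp_gt0 ynz; rewrite /dotp; under eq_bigr do rewrite -expr2; by [].
  set ny := \sum_i y 0 i ^+ 2 in ny0 nyp *.
  pose sq := Num.sqrt ny.
  have sqp : 0 < sq by rewrite sqrtr_gt0.
  have sq2 : sq ^+ 2 = ny by rewrite sqr_sqrtr // ltW.
  pose z := sq^-1 *: y.
  have zE i : z 0 i = sq^-1 * y 0 i by rewrite mxE.
  have z1 : \sum_i z 0 i ^+ 2 = 1.
    under eq_bigr do rewrite zE exprMn.
    by rewrite -mulr_sumr -/ny -sq2 mulrC -exprMn divff ?expr1n // gt_eqF.
  have := sepz z z1.
  have -> : \sum_i z 0 i = sq^-1 * \sum_i y 0 i.
    by rewrite mulr_sumr; apply: eq_bigr => i _; rewrite zE.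
  have -> : sG G (fun i j => fp ((X0 *m X0^T) i j) * (z 0 i * z 0 j)) =
      sq^-1 ^+ 2 * sG G (fun i j => mu i j * (y 0 i * y 0 j)).
    by rewrite -sG_scale; apply: sG_eq => i j _; rewrite !zE /mu /B0; ring.
  rewrite -/B0 -/al -/h0.
  set Q := \sum_i y 0 i; set S := sG G _ => H.
  have e2 : al * (sq^-1 * Q) ^+ 2 - sq^-1 ^+ 2 * S = (al * Q ^+ 2 - S) / ny.
    by rewrite -sq2; field; rewrite gt_eqF.
  by move: H; rewrite e2 ler_pdivrMr.
have muS i j : mu j i = mu i j by rewrite /mu -!B0E dotpC.
pose a := k' / (k' - 1).
pose b := - (k' - 1)^-1.
pose c := (k' - 1)^-1 / al.
pose M i j := if G i j then mu i j else 0.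
pose U : 'M[R]_n := \matrix_(i, j) (a * (i == j)%:R + b + c * M i j).
have sU : U^T = U.
  by apply/matrixP => i j; rewrite !mxE eq_sym /M Gsym muS.
have pU : psd U.
  move=> x; rewrite qfE.
  under eq_bigr do under eq_bigr do rewrite mxE.
  rewrite (qf_split (fun i => x 0 i)) (sG_qf G (fun i => x 0 i)).
  have := gen x.
  set ny := \sum_i x 0 i ^+ 2; set Q := (\sum_i x 0 i) ^+ 2; set S := sG G _ => H.
  have ny0 : 0 <= ny by apply: sumr_ge0 => i _; apply: sqr_ge0.
  have E : a * ny + b * Q + c * S = (al * (k' * ny - Q) + S) / ((k' - 1) * al).
    by rewrite /a /b /c; field; rewrite !gt_eqF.
  rewrite E; apply: divr_ge0; last by apply: mulr_ge0; apply: ltW.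
  have E2 : al * (k' * ny - Q) + S = ((al * k - h0) * ny - (al * Q - S)) + (h0 / 2) * ny.
    by rewrite /k' /eps; field; rewrite gt_eqF.
  rewrite E2; apply: addr_ge0; first by rewrite subr_ge0.
  by apply: mulr_ge0 => //; apply: divr_ge0 => //; apply: ltW.
have [W WE] := cholesky sU pU.
exists k'; split; first by rewrite /k' ltrBlDr ltrDl.
split; first by rewrite -subr_gt0.
exists (fun i => row i W).
have uE i j : dotp (row i W) (row j W) = U i j by rewrite gram_dotp -WE.
split; [|split].
- move=> i; rewrite uE mxE eqxx /M Girr mulr0 addr0 /a /b mulr1; field; rewrite gt_eqF //.
- move=> i j; rewrite /compl_graph => /andP [ij gij]; rewrite uE mxE (negbTE ij) /M (negbTE gij).
  by rewrite mulr0 mulr0 add0r addr0.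
- move=> i j ij; rewrite /compl_graph ij /= negbK => gij.
  rewrite uE mxE (negbTE ij) /M gij mulr0 add0r /b lerDl.
  by apply: mulr_ge0; [apply: divr_ge0; [rewrite invr_ge0 ltW | apply: ltW] | apply: fp_ge0].
Qed.

End K6.

End M_k6.
Import M_k6.

Unset Implicit Arguments.
Local Open Scope ring_scope.

Theorem lemma2 (R : realType) (n : nat) (G : rel 'I_n) :
  (0 < n)%N -> simple_graph G ->
  (exists (d : nat) (v0 : 'rV[R]_d) (v : 'I_n -> 'rV[R]_d),
      (0 < d)%N /\ theta2'_feasible G v0 v /\
      theta2'_value v0 v = theta2 R G) /\
  (forall (d : nat) (v0 : 'rV[R]_d) (v : 'I_n -> 'rV[R]_d),
      (0 < d)%N -> theta2'_feasible G v0 v ->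
      theta2'_value v0 v <= theta2 R G).
Proof.
move=> n0 [Gsym Girr].
pose S : set R := fun k => 1 < k /\ exists u, rigid_vector_coloring (compl_graph G) k u.
have thE : theta2 R G = inf S by [].
have hlb : has_lbound S by exists 1 => k [k1 _]; apply: ltW.
have infle : forall k, S k -> inf S <= k by move=> k Sk; apply: ge_inf.
have vle : forall d (v0 : 'rV[R]_d) v, theta2'_feasible G v0 v -> theta2'_value v0 v <= n%:R.
  move=> d v0 v _; rewrite /theta2'_value.
  apply: le_trans (_ : \sum_(i < n) (1 : R) <= _).
    by apply: ler_sum => i _; apply: cfun_le1.
  by rewrite sumr_const card_ord.
have neS : nonempty S.
  have [[X [X1 [XE Xk]]]|[k' [_ [k'1 [u Hu]]]]] := key (n%:R + 1 : R) n0 Gsym Girr.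
    have [v0 [v [fv vk]]] := convert (ltr_pwDr ltr01 (ler0n _ n)) X1 XE Xk.
    have h := le_trans vk (vle _ _ _ fv); exfalso; move: h; set m := (n%:R : R); lra.
  by exists k'; split => //; exists u.
have weakp : forall d (v0 : 'rV[R]_d) v, theta2'_feasible G v0 v -> theta2'_value v0 v <= inf S.
  move=> d v0 v fv; apply: lb_le_inf => // k [k1 [u Hu]].
  exact: weak fv k1 Hu.
have inf1 : 1 <= inf S by apply: lb_le_inf => // k [k1 _]; apply: ltW.
rewrite thE; split; last by move=> d v0 v _; apply: weakp.
have [[X [X1 [XE Xk]]]|[k' [k'lt [k'1 [u Hu]]]]] := key (inf S) n0 Gsym Girr; last first.
  have := infle k' (conj k'1 (ex_intro _ u Hu)).
  by rewrite leNgt k'lt.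
have [v0 [v [fv vk]]] := convert (lt_le_trans ltr01 inf1) X1 XE Xk.
exists n, v0, v; split => //; split => //.
by apply/eqP; rewrite eq_le vk weakp.
Qed.
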